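(* Let $p$ be a prime, $C\subseteq\mathbb{F}_p^{2n}$ a symplectic self-orthogonal code with stabilizer code $Q(C)\subseteq\mathbb{C}^{p^n}$, and let $\emptyset\neq I\subsetneq J\subsetneq\{1,\dots,n\}$. If $Q(C)$ is $(I,J)$-locally recoverable, then \[\sigma_I\left[\pi_J\left(C^{\perp_s}\right)\right]=\sigma_I(C).\]
   Context: Vectors of $\mathbb{F}_p^{2n}$ are written $(\mathbf a|\mathbf b)$, coordinate pairs $(a_j,b_j)$ indexed by $j\in\{1,\dots,n\}$. Symplectic form: $(\mathbf a|\mathbf b)\cdot_s(\mathbf c|\mathbf d)=\mathbf a\cdot\mathbf d-\mathbf b\cdot\mathbf c$; $C^{\perp_s}$ is the dual; $C$ is symplectic self-orthogonal if $C\subseteq C^{\perp_s}$. For $R\subseteq\{1,\dots,n\}$: $\pi_R(\mathbf a|\mathbf b)=(a_j|b_j)_{j\in R}$, puncturing $\pi_R(D)=\{\pi_R(\mathbf y):\mathbf y\in D\}$, shortening $\sigma_R(D)=\{\pi_R(\mathbf y):\mathbf y=(\mathbf a|\mathbf b)\in D,\ \mathrm{supp}(\mathbf a)\cup\mathrm{supp}(\mathbf b)\subseteq R\}$; the shortening at $I$ of a code with coordinate pairs indexed by $J\supseteq I$ is defined the same way. Quantum setting: $\xi=e^{2\pi\iota/p}$, $X(a)|x\rangle=|x+a\rangle$, $Z(b)|x\rangle=\xi^{bx}|x\rangle$ on $\mathbb C^p$, $E_{(\mathbf a,\mathbf b)}=\bigotimes_jX(a_j)Z(b_j)$. $Q(C)$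 is the common eigenspace $\{v:Ev=\lambda(E)v\ \forall E\in S\}$, $S$ the commutative group generated by scalars $\xi^\ell\mathcal I$ and $E_{\mathbf y}$, $\mathbf y\in C$, $\lambda$ a character of $S$ with $\lambda(\xi\mathcal I)=\xi$. Let $\Gamma(\rho)=p^{-2}\sum_{a,b}X(a)Z(b)\rho(X(a)Z(b))^\dagger$, and $\Gamma^I$ apply $\Gamma$ to the qudits indexed by $I$ and the identity elsewhere. For $\emptyset\ne I\subsetneq J$, a code $Q$ is $(I,J)$-locally recoverable if there is a trace-preserving quantum operation $\mathcal R$ acting only on the qudits indexed by $J$ (identity on the others) with $\mathcal R\circ\Gamma^I(|\varphi\rangle\langle\varphi|)=|\varphi\rangle\langle\varphi|$ for all $|\varphi\rangle\in Q$. *)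

(* Defs.v *)
From HB Require Import structures.
From mathcomp Require Import all_boot all_order all_algebra.
Set Implicit Arguments. Unset Strict Implicit. Unset Printing Implicit Defensive.
Import Order.TTheory GRing.Theory Num.Theory.
Local Open Scope ring_scope.

(* F_p^n, coordinates indexed by 'I_n = {1..n} (shifted to {0..n-1}) *)
Notation fvec p n := {ffun 'I_n -> 'F_p}.
Notation svec p n := (fvec p n * fvec p n)%type.

Section Codes.
Variables (p n : nat).
Local Notation fvec := (fvec p n).
Local Notation svec := (svec p n).

Definition szero : svec := ([ffun=> 0], [ffun=> 0]).
Definition sadd (u v : svec) : svec :=
  ([ffun j => u.1 j + v.1 j], [ffun j => u.2 j + v.2 j]).
Definition sscale (c : 'F_p) (u : svec) : svec :=
  ([ffun j => c * u.1 j], [ffun j => c * u.2 j]).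

Definition linear_code (C : {set svec}) : Prop :=
  [/\ szero \in C,
      forall u v, u \in C -> v \in C -> sadd u v \in C &
      forall c u, u \in C -> sscale c u \in C].

Definition symp (u v : svec) : 'F_p :=
  \sum_j (u.1 j * v.2 j - u.2 j * v.1 j).

Definition symp_dual (C : {set svec}) : {set svec} :=
  [set v | [forall u in C, symp u v == 0]].

Definition symp_self_orth (C : {set svec}) : Prop := C \subset symp_dual C.

Definition ssupp (y : svec) : {set 'I_n} :=
  [set j | (y.1 j != 0) || (y.2 j != 0)].

(* pi_R: a vector indexed by R is represented by the vector of F_p^{2n}
   that agrees with it on R and is zero off R (canonical identification). *)
Definition sproj (R : {set 'I_n}) (y : svec) : svec :=
  ([ffun j => if j \in R then y.1 j else 0],
   [ffun j => if j \in R then y.2 j else 0]).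

Definition code_puncture (R : {set 'I_n}) (D : {set svec}) : {set svec} :=
  [set sproj R y | y in D].

Definition code_shorten (R : {set 'I_n}) (D : {set svec}) : {set svec} :=
  [set sproj R y | y in [set y in D | ssupp y \subset R]].

End Codes.

Notation qvec K p n := {ffun fvec p n -> K}.
Notation qop K p n := {ffun (fvec p n * fvec p n)%type -> K}.

Section Quantum.
Variables (K : numClosedFieldType) (p n : nat).

Local Notation basis := (fvec p n).
(* vectors of C^{p^n} and operators (matrices indexed by basis x basis,
   entry (y,x) = <y|A|x>) *)
Local Notation qvec := (qvec K p n).
Local Notation qop := (qop K p n).

Definition opmul (A B : qop) : qop :=
  [ffun yx : basis * basis => \sum_(z : basis) A (yx.1, z) * B (z, yx.2)].
Definition opadj (A : qop) : qop :=
  [ffun yx : basis * basis => (A (yx.2, yx.1))^*].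
Definition opid : qop := [ffun yx : basis * basis => (yx.1 == yx.2)%:R].
Definition opscale (c : K) (A : qop) : qop := [ffun yx => c * A yx].
Definition vscale (c : K) (v : qvec) : qvec := [ffun y => c * v y].
Definition opapply (A : qop) (v : qvec) : qvec :=
  [ffun y => \sum_(x : basis) A (y, x) * v x].
Definition ketbra (phi : qvec) : qop :=
  [ffun yx : basis * basis => phi yx.1 * (phi yx.2)^*].

(* xi = e^{2 pi i / p} = (e^{i pi / p})^2, where p.-root (-1) is the p-th
   root of -1 of minimal non-negative argument, i.e. e^{i pi/p}. *)
Definition xi : K := (p.-root (-1)) ^+ 2.

(* E_(a,b) = (x)_j X(a_j) Z(b_j), with X(a)|x> = |x+a>, Z(b)|x> = xi^{bx}|x>;
   its matrix entry at (y,x) is [y = x + a] * xi^{sum_j b_j x_j}. *)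
Definition Eop (y : svec p n) : qop :=
  [ffun yx : basis * basis =>
     (yx.1 == [ffun j => yx.2 j + y.1 j])%:R *
     xi ^+ (\sum_j (nat_of_ord (y.2 j) * nat_of_ord (yx.2 j)))%N].

(* S = group generated by the scalars xi^l I and the E_y, y in C.
   (All generators have finite order, so the generated monoid is the
   generated group.) *)
Inductive stab (C : {set svec p n}) : qop -> Prop :=
| stab_scalar (l : nat) : stab C (opscale (xi ^+ l) opid)
| stab_gen (y : svec p n) : y \in C -> stab C (Eop y)
| stab_mul (A B : qop) : stab C A -> stab C B -> stab C (opmul A B).

Definition stab_character (C : {set svec p n}) (lam : qop -> K) : Prop :=
  (forall A B, stab C A -> stab C B -> lam (opmul A B) = lam A * lam B) /\
  lam (opscale xi opid) = xi.

Definition stab_code (C : {set svec p n}) (lam : qop -> K) (v : qvec) : Prop :=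
  forall A, stab C A -> opapply A v = vscale (lam A) v.

(* Gamma^I = (x)_{j in I} Gamma on qudit j, identity elsewhere;
   written out: p^{-2|I|} sum over (a,b) supported in I of E_(a,b) rho E_(a,b)^dag *)
Definition GammaI (I : {set 'I_n}) (rho : qop) : qop :=
  opscale ((p%:R : K) ^+ (2 * #|I|))^-1
    (\sum_(y : svec p n | ssupp y \subset I) opmul (opmul (Eop y) rho) (opadj (Eop y))).

(* Operators acting only on the qudits of J: K_J (x) I.  A J-local operator
   is given by k, only its values on configurations supported in J matter. *)
Definition padJ (J : {set 'I_n}) (x : basis) : basis :=
  [ffun j => if j \in J then x j else 0].
Definition agree_off (J : {set 'I_n}) (y x : basis) : bool :=
  [forall j, (j \notin J) ==> (y j == x j)].
Definition liftJ (J : {set 'I_n}) (k : qop) : qop :=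
  [ffun yx : basis * basis =>
     if agree_off J yx.1 yx.2 then k (padJ J yx.1, padJ J yx.2) else 0].

(* A trace-preserving quantum operation acting only on the qudits of J,
   in Kraus form R(rho) = sum_k (K_k (x) I) rho (K_k (x) I)^dag with
   sum_k (K_k (x) I)^dag (K_k (x) I) = identity. *)
Definition kraus_apply (J : {set 'I_n}) (ks : seq qop) (rho : qop) : qop :=
  \sum_(k <- ks) opmul (opmul (liftJ J k) rho) (opadj (liftJ J k)).
Definition kraus_TP (J : {set 'I_n}) (ks : seq qop) : Prop :=
  \sum_(k <- ks) opmul (opadj (liftJ J k)) (liftJ J k) = opid.

Definition locally_recoverable (Q : qvec -> Prop) (I J : {set 'I_n}) : Prop :=
  [/\ I != set0, I \proper J &
      exists ks : seq qop, kraus_TP J ks /\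
        forall phi : qvec, Q phi ->
          kraus_apply J ks (GammaI I (ketbra phi)) = ketbra phi].

End Quantum.

(* Main.v *)
Require Import Defs.
From HB Require Import structures.
From mathcomp Require Import all_boot all_order all_algebra.
From mathcomp Require Import ring.
Set Implicit Arguments. Unset Strict Implicit. Unset Printing Implicit Defensive.
Import Order.TTheory GRing.Theory Num.Theory.
Local Open Scope ring_scope.


Section Xi.
Variables (K : numClosedFieldType) (p : nat).
Hypothesis pP : prime p.

Local Notation xi := (xi K p).

Lemma p_gt1 : (1 < p)%N. Proof. exact: prime_gt1. Qed.

Lemma xi_p : xi ^+ p = 1.
Proof.
rewrite /Defs.xi -exprM mulnC exprM rootCK; last by rewrite prime_gt0.
by rewrite expr2 mulrNN mulr1.
Qed.

Lemma xi_neq1 : xi != 1.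
Proof.
rewrite /Defs.xi; set r := p.-root (-1).
have hr : r ^+ p = -1 by rewrite rootCK // prime_gt0.
apply/eqP => h.
have : (r - 1) * (r + 1) = 0.
  have -> : (r - 1) * (r + 1) = r ^+ 2 - 1 by ring.
  by rewrite h subrr.
move/eqP; rewrite mulf_eq0 => /orP[].
  rewrite subr_eq0 => /eqP r1. move: hr; rewrite r1 expr1n => /eqP.
  rewrite -subr_eq0 opprK => /eqP h2.
  by have := @pnatr_eq0 K 2; rewrite mulr2n h2 eqxx.
rewrite addr_eq0 => /eqP r1.
have : (r < 0) = false by apply: rootC_lt0; exact: p_gt1.
by rewrite r1 oppr_lt0 ltr01.
Qed.

Lemma xi_neq0 : xi != 0.
Proof.
apply/eqP => h; have := xi_p; rewrite h expr0n eqn0Ngt prime_gt0 //=.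
by move/eqP; rewrite eq_sym oner_eq0.
Qed.

Definition ph (t : 'F_p) : K := xi ^+ (nat_of_ord t).

Lemma ph_nat m : ph (m%:R) = xi ^+ m.
Proof. by rewrite /ph val_Fp_nat // expr_mod // xi_p. Qed.

Lemma ph_add s t : ph (s + t) = ph s * ph t.
Proof.
by rewrite -[s]natr_Zp -[t]natr_Zp -natrD !ph_nat exprD.
Qed.

Lemma ph0 : ph 0 = 1.
Proof. by rewrite /ph /= expr0. Qed.

Lemma ph1 : ph 1 = xi.
Proof. by have := ph_nat 1; rewrite expr1. Qed.

Lemma ph_neq0 t : ph t != 0.
Proof. by rewrite /ph expf_neq0 // xi_neq0. Qed.

Lemma ph_sum (I : finType) (F : I -> 'F_p) : ph (\sum_i F i) = \prod_i ph (F i).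
Proof.
apply: (big_morph ph ph_add ph0).
Qed.

End Xi.


Section Ops.
Variables (K : numClosedFieldType) (p n : nat).
Hypothesis pP : prime p.
Local Notation basis := (fvec p n).
Local Notation sv := (svec p n).
Local Notation qop := (qop K p n).
Local Notation qvec := (qvec K p n).
Local Notation ph := (@ph K p).
Let phadd := ph_add K pP.
Let phnat := ph_nat K pP.
Local Notation Eop := (@Eop K p n).

Definition dotF (b x : basis) : 'F_p := \sum_j b j * x j.

Lemma dotFC b x : dotF b x = dotF x b.
Proof. by apply: eq_bigr => j _; rewrite mulrC. Qed.
Lemma dotFDl b b' x : dotF (b + b') x = dotF b x + dotF b' x.
Proof. by rewrite /dotF -big_split; apply: eq_bigr => j _; rewrite ffunE mulrDl. Qed.
Lemma dotFDr b x x' : dotF b (x + x') = dotF b x + dotF b x'.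
Proof. by rewrite /dotF -big_split; apply: eq_bigr => j _; rewrite ffunE mulrDr. Qed.
Lemma dotFNr b x : dotF b (- x) = - dotF b x.
Proof. by rewrite /dotF -sumrN; apply: eq_bigr => j _; rewrite ffunE mulrN. Qed.
Lemma dotFNl b x : dotF (- b) x = - dotF b x.
Proof. by rewrite dotFC dotFNr dotFC. Qed.
Lemma dotF0r b : dotF b 0 = 0.
Proof. by rewrite /dotF big1 // => j _; rewrite ffunE mulr0. Qed.
Lemma dotF0l b : dotF 0 b = 0.
Proof. by rewrite dotFC dotF0r. Qed.

Lemma Eop_E y z x : Eop y (z, x) = (z == x + y.1)%:R * ph (dotF y.2 x).
Proof.
rewrite /Defs.Eop ffunE /=.
have -> : [ffun j => x j + y.1 j] = x + y.1 by apply/ffunP => j; rewrite !ffunE.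
congr (_ * _).
rewrite /dotF -phnat natr_sum; congr (ph _); apply: eq_bigr => j _.
by rewrite natrM !natr_Zp.
Qed.

Lemma sadd_E (u v : sv) : sadd u v = (u.1 + v.1, u.2 + v.2).
Proof. by rewrite /sadd; congr pair; apply/ffunP => j; rewrite !ffunE. Qed.

Lemma sum_delta (F : basis -> K) c : \sum_z (z == c)%:R * F z = F c.
Proof.
rewrite (bigD1 c) //= eqxx mul1r big1 ?addr0 // => z /negbTE ->.
by rewrite mul0r.
Qed.

Lemma opmulE (A B : qop) y x : opmul A B (y, x) = \sum_z A (y, z) * B (z, x).
Proof. by rewrite /opmul ffunE. Qed.

Lemma EopM (u v : sv) :
  opmul (Eop u) (Eop v) = opscale (ph (dotF u.2 v.1)) (Eop (sadd u v)).
Proof.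
apply/ffunP => -[y x]; rewrite opmulE /opscale ffunE Eop_E sadd_E /=.
under eq_bigr => z _ do rewrite !Eop_E /= [_ * ((z == _)%:R * _)]mulrC -!mulrA.
rewrite sum_delta /= dotFDr dotFDl !phadd addrA [x + u.1 + v.1]addrAC -addrA [v.1 + _]addrC.
ring.
Qed.


Lemma opapplyE (A : qop) v y : opapply A v y = \sum_x A (y, x) * v x.
Proof. by rewrite ffunE. Qed.

Lemma opmulA (A B C : qop) : opmul (opmul A B) C = opmul A (opmul B C).
Proof.
apply/ffunP => -[y x]; rewrite !opmulE.
under eq_bigr => z _ do rewrite opmulE mulr_suml.
rewrite exchange_big /=; apply: eq_bigr => z _.
by rewrite opmulE mulr_sumr; apply: eq_bigr => w _; rewrite mulrA.
Qed.

Lemma opapplyM (A B : qop) v : opapply (opmul A B) v = opapply A (opapply B v).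
Proof.
apply/ffunP => y; rewrite !opapplyE.
under eq_bigr => z _ do rewrite opmulE mulr_suml.
rewrite exchange_big /=; apply: eq_bigr => z _.
by rewrite opapplyE mulr_sumr; apply: eq_bigr => w _; rewrite mulrA.
Qed.

Lemma opmul_scalel c (A B : qop) : opmul (opscale c A) B = opscale c (opmul A B).
Proof.
apply/ffunP => -[y x]; rewrite !ffunE /= mulr_sumr.
by apply: eq_bigr => z _; rewrite ffunE mulrA.
Qed.

Lemma opmul_scaler c (A B : qop) : opmul A (opscale c B) = opscale c (opmul A B).
Proof.
apply/ffunP => -[y x]; rewrite !ffunE /= mulr_sumr.
by apply: eq_bigr => z _; rewrite ffunE mulrCA.
Qed.

Lemma opscale1 (A : qop) : opscale 1 A = A.
Proof. by apply/ffunP => yx; rewrite ffunE mul1r. Qed.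

Lemma opscaleM c d (A : qop) : opscale c (opscale d A) = opscale (c * d) A.
Proof. by apply/ffunP => yx; rewrite !ffunE mulrA. Qed.

Lemma opmul1l (A : qop) : opmul (opid K p n) A = A.
Proof.
apply/ffunP => -[y x]; rewrite opmulE.
under eq_bigr => z _ do rewrite ffunE /= eq_sym.
by rewrite sum_delta.
Qed.

Lemma opmul1r (A : qop) : opmul A (opid K p n) = A.
Proof.
apply/ffunP => -[y x]; rewrite opmulE.
under eq_bigr => z _ do rewrite ffunE /= mulrC.
by rewrite sum_delta.
Qed.

Lemma opapply_scale c (A : qop) v : opapply (opscale c A) v = vscale c (opapply A v).
Proof.
apply/ffunP => y; rewrite !ffunE mulr_sumr; apply: eq_bigr => x _.
by rewrite ffunE mulrA.
Qed.

Lemma opapply_vscale c (A : qop) v : opapply A (vscale c v) = vscale c (opapply A v).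
Proof.
apply/ffunP => y; rewrite !ffunE mulr_sumr; apply: eq_bigr => x _.
by rewrite ffunE mulrCA.
Qed.

Lemma opapplyD (A : qop) v w : opapply A (v + w) = opapply A v + opapply A w.
Proof.
apply/ffunP => y; rewrite !ffunE -big_split; apply: eq_bigr => x _.
by rewrite ffunE mulrDr.
Qed.

Lemma opapply0 (A : qop) : opapply A 0 = 0.
Proof. by apply/ffunP => y; rewrite !ffunE big1 // => x _; rewrite ffunE mulr0. Qed.

Lemma opapply_id v : opapply (opid K p n) v = v.
Proof.
apply/ffunP => y; rewrite ffunE.
under eq_bigr => x _ do rewrite ffunE /= eq_sym.
by rewrite sum_delta.
Qed.

Lemma Eop0 : Eop (szero p n) = opid K p n.
Proof.
apply/ffunP => -[y x]; rewrite Eop_E ffunE /=.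
have -> : dotF [ffun=> 0] x = 0 by rewrite /dotF big1 // => j _; rewrite ffunE mul0r.
have -> : x + [ffun=> 0] = x by apply/ffunP => j; rewrite !ffunE addr0.
by rewrite ph0 mulr1.
Qed.

Lemma eq_shift (y x a : basis) : (y == x + a) = (x == y - a).
Proof. by rewrite -subr_eq eq_sym. Qed.

Lemma Eop_apply (u : sv) v :
  opapply (Eop u) v = [ffun y : basis => ph (dotF u.2 (y - u.1)) * v (y - u.1)].
Proof.
apply/ffunP => y; rewrite !ffunE.
under eq_bigr => x _ do rewrite Eop_E eq_shift -mulrA.
by rewrite sum_delta.
Qed.

Lemma Eop_apply_eq0 (u : sv) v : opapply (Eop u) v = 0 -> v = 0.
Proof.
rewrite Eop_apply => /ffunP h; apply/ffunP => z.
have := h (z + u.1); rewrite !ffunE addrK => /eqP.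
by rewrite mulf_eq0 (negbTE (ph_neq0 K pP _)) /= => /eqP.
Qed.

End Ops.


Lemma saddE p n (u v : svec p n) : sadd u v = u + v.
Proof. rewrite /sadd. congr pair; apply/ffunP => j; rewrite !ffunE //. Qed.
Lemma szeroE p n : szero p n = 0.
Proof. rewrite /szero. congr pair; apply/ffunP => j; rewrite !ffunE //. Qed.
Lemma sscaleN1 p n (u : svec p n) : sscale (-1) u = - u.
Proof. rewrite /sscale. congr pair; apply/ffunP => j; rewrite !ffunE mulN1r //. Qed.

Section Stab.
Variables (K : numClosedFieldType) (p n : nat).
Hypothesis pP : prime p.
Local Notation basis := (fvec p n).
Local Notation sv := (svec p n).
Local Notation qop := (qop K p n).
Local Notation qvec := (qvec K p n).
Local Notation ph := (@ph K p).
Local Notation Eop := (@Eop K p n).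
Local Notation xi := (xi K p).
Local Notation opid := (opid K p n).
Let phadd := ph_add K pP.
Let EopE := @Eop_E K p n pP.

Variables (C : {set sv}) (lam : qop -> K).
Hypothesis linC : linear_code C.
Hypothesis chi : stab_character C lam.

Lemma C0 : 0 \in C.
Proof. by case: linC; rewrite szeroE. Qed.
Lemma CD u v : u \in C -> v \in C -> u + v \in C.
Proof. by case: linC => _ h _ /h hv /hv; rewrite saddE. Qed.
Lemma CN u : u \in C -> - u \in C.
Proof. by case: linC => _ _ h /(h (-1)); rewrite sscaleN1. Qed.

Lemma EopM' (u v : sv) : opmul (Eop u) (Eop v) = opscale (ph (dotF u.2 v.1)) (Eop (u + v)).
Proof. by rewrite EopM // saddE. Qed.
Lemma Eop0' : Eop 0 = opid.
Proof. by rewrite -szeroE Eop0. Qed.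

Lemma stab_id : stab C opid.
Proof. by have := stab_scalar K C 0; rewrite expr0 opscale1. Qed.
Lemma stab_xi : stab C (opscale xi opid).
Proof. by have := stab_scalar K C 1; rewrite expr1. Qed.

Lemma lam_mul A B : stab C A -> stab C B -> lam (opmul A B) = lam A * lam B.
Proof. by case: chi => h _; apply: h. Qed.

Lemma lam_id : lam opid = 1.
Proof.
have := lam_mul stab_xi stab_id; rewrite opmul1r; case: chi => _ ->.
move/eqP; rewrite -subr_eq0 -{1}[xi]mulr1 -mulrBr mulf_eq0 (negbTE (xi_neq0 K pP)) /=.
by rewrite subr_eq0 eq_sym => /eqP.
Qed.

Lemma opscale_opid c A : opscale c A = opmul (opscale c opid) A.
Proof. by rewrite opmul_scalel opmul1l. Qed.

Lemma lam_scal l : lam (opscale (xi ^+ l) opid) = xi ^+ l.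
Proof.
elim: l => [|l IH]; first by rewrite expr0 opscale1 lam_id.
have -> : opscale (xi ^+ l.+1) opid = opmul (opscale xi opid) (opscale (xi ^+ l) opid).
  by rewrite opmul_scalel opmul1l opscaleM exprS.
by rewrite lam_mul ?IH; [case: chi => _ -> ; rewrite exprS | exact: stab_xi | exact: stab_scalar].
Qed.

Lemma stab_scale l A : stab C A -> stab C (opscale (xi ^+ l) A).
Proof. by move=> hA; rewrite opscale_opid; apply: stab_mul => //; apply: stab_scalar. Qed.

Lemma lam_scale l A : stab C A -> lam (opscale (xi ^+ l) A) = xi ^+ l * lam A.
Proof. by move=> hA; rewrite opscale_opid lam_mul ?lam_scal //; apply: stab_scalar. Qed.

Lemma stab_E u : u \in C -> stab C (Eop u).
Proof. move=> hu; exact: (@stab_gen K p n C u hu). Qed.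

Lemma lam_EM u v : u \in C -> v \in C ->
  lam (Eop u) * lam (Eop v) = ph (dotF u.2 v.1) * lam (Eop (u + v)).
Proof.
move=> hu hv; rewrite -lam_mul; [|exact: stab_E|exact: stab_E]. rewrite (EopM' u v).
by rewrite lam_scale //; apply: stab_E; apply: CD.
Qed.

Lemma lam_E_neq0 u : u \in C -> lam (Eop u) != 0.
Proof.
move=> hu; apply/negP => /eqP h.
have := lam_EM hu (CN hu); rewrite h mul0r subrr Eop0' lam_id mulr1 => /esym/eqP.
by rewrite (negbTE (ph_neq0 K pP _)).
Qed.


Lemma CDr u v : u \in C -> (u + v \in C) = (v \in C).
Proof.
move=> hu; apply/idP/idP => [h|]; last exact: CD.
by rewrite -(addKr u v); apply: CD => //; apply: CN.
Qed.

Lemma sum_shift u (F : sv -> qop) : u \in C ->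
  \sum_(v in C) F (u + v) = \sum_(w in C) F w.
Proof.
move=> hu; rewrite [RHS](reindex (fun v => u + v)) /=.
  by apply: eq_bigl => v; rewrite CDr.
by exists (fun w => - u + w) => w _; rewrite ?addKr ?addNKr.
Qed.

Lemma opmul_sumr (I : finType) (P : pred I) (A : qop) (B : I -> qop) :
  opmul A (\sum_(i | P i) B i) = \sum_(i | P i) opmul A (B i).
Proof.
apply/ffunP => -[y x]; rewrite opmulE sum_ffunE.
under eq_bigr => z _ do rewrite sum_ffunE mulr_sumr.
rewrite exchange_big; apply: eq_bigr => i _; by rewrite opmulE.
Qed.

Lemma opmul_suml (I : finType) (P : pred I) (A : qop) (B : I -> qop) :
  opmul (\sum_(i | P i) B i) A = \sum_(i | P i) opmul (B i) A.
Proof.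
apply/ffunP => -[y x]; rewrite opmulE sum_ffunE.
under eq_bigr => z _ do rewrite sum_ffunE mulr_suml.
rewrite exchange_big; apply: eq_bigr => i _; by rewrite opmulE.
Qed.

Lemma opscale_sum (I : finType) (P : pred I) c (B : I -> qop) :
  opscale c (\sum_(i | P i) B i) = \sum_(i | P i) opscale c (B i).
Proof.
apply/ffunP => yx; rewrite ffunE !sum_ffunE mulr_sumr.
by apply: eq_bigr => i _; rewrite ffunE.
Qed.

Definition Pop : qop := \sum_(v in C) opscale (lam (Eop v))^-1 (Eop v).

Lemma EP u : u \in C -> opmul (Eop u) Pop = opscale (lam (Eop u)) Pop.
Proof.
move=> hu; rewrite /Pop opmul_sumr opscale_sum; symmetry; rewrite -(sum_shift _ hu); symmetry.
apply: eq_bigr => v hv.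
rewrite opmul_scaler EopM' opscaleM opscaleM; congr opscale.
have h1 := lam_E_neq0 hv; have h2 := lam_E_neq0 (CD hu hv).
have := lam_EM hu hv => e.
rewrite -[ph _](mulfK h2) -e.
field; exact/andP.
Qed.

Lemma stabP A : stab C A -> opmul A Pop = opscale (lam A) Pop.
Proof.
elim => [l|y hy|A' B hA IA hB IB].
- by rewrite opmul_scalel opmul1l lam_scal.
- exact: EP.
- rewrite opmulA IB opmul_scaler IA opscaleM lam_mul //.
  by rewrite mulrC.
Qed.

Lemma Q_P psi : stab_code C lam (opapply Pop psi).
Proof.
move=> A hA; by rewrite -opapplyM stabP // opapply_scale.
Qed.


Definition tr (A : qop) : K := \sum_x A (x, x).

Lemma tr_sum (I : finType) (P : pred I) (B : I -> qop) :
  tr (\sum_(i | P i) B i) = \sum_(i | P i) tr (B i).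
Proof.
rewrite /tr; under eq_bigr => x _ do rewrite sum_ffunE.
by rewrite exchange_big.
Qed.

Lemma tr_scale c A : tr (opscale c A) = c * tr A.
Proof. by rewrite /tr mulr_sumr; apply: eq_bigr => x _; rewrite ffunE. Qed.

Lemma card_basis : #|{: basis}| = (p ^ n)%N.
Proof. by rewrite card_ffun card_Fp // card_ord. Qed.

Lemma N_neq0 : (#|{: basis}|%:R : K) != 0.
Proof.
rewrite card_basis pnatr_eq0 expn_eq0; apply/negP => /andP[/eqP p0 _].
by move: pP; rewrite p0.
Qed.

Lemma tr_id : tr opid = #|{: basis}|%:R.
Proof.
rewrite /tr; under eq_bigr => x _ do rewrite ffunE /= eqxx.
by rewrite sumr_const.
Qed.

Lemma tr_E u : u != 0 -> tr (Eop u) = 0.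
Proof.
move=> hu; rewrite /tr; under eq_bigr => x _ do rewrite EopE.
case: (eqVneq u.1 0) => h1; last first.
  rewrite big1 // => x _.
  have -> : (x == x + u.1) = false.
    apply/negP => /eqP h; move: h1; by rewrite -(addKr x u.1) -h addNr eqxx.
  by rewrite mul0r.
under eq_bigr => x _ do rewrite h1 addr0 eqxx mul1r.
have h2 : u.2 != 0.
  apply: contra hu => /eqP h2; apply/eqP; case: u h1 h2 => a b /= -> -> //.
case: (pickP (fun j => u.2 j != 0)) => [j hj|hnone]; last first.
  have e2 : u.2 = 0.
    apply/ffunP => j; rewrite ffunE; apply/eqP.
    by have := hnone j => /= /negbFE.
  by rewrite e2 eqxx in h2.
set e : basis := [ffun i => if i == j then (u.2 j)^-1 else 0].
have he : dotF u.2 e = 1.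
  rewrite /dotF (bigD1 j) //= ffunE eqxx mulfV // big1 ?addr0 // => i /negbTE hi.
  by rewrite ffunE hi mulr0.
set S := \sum_x _.
have : S = xi * S.
  rewrite {1}/S (reindex_inj (addIr e)) /= /S mulr_sumr; apply: eq_bigr => x _.
  by rewrite dotFDr phadd he ph1 // mulrC.
move/eqP; rewrite -subr_eq0 -{1}[S]mul1r -mulrBl mulf_eq0 subr_eq0 eq_sym.
by rewrite (negbTE (xi_neq1 K pP)) /= => /eqP.
Qed.

Lemma tr_P : tr Pop = #|{: basis}|%:R.
Proof.
rewrite /Pop tr_sum (bigD1 (0 : sv)) ?C0 //= big1 ?addr0.
  by rewrite tr_scale Eop0' lam_id invr1 mul1r tr_id.
by move=> v /andP[_ hv]; rewrite tr_scale tr_E // mulr0.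
Qed.

Definition delta (x : basis) : qvec := [ffun z => (z == x)%:R].

Lemma opapply_delta (A : qop) x : opapply A (delta x) = [ffun y => A (y, x)].
Proof.
apply/ffunP => y; rewrite !ffunE.
under eq_bigr => z _ do rewrite ffunE mulrC.
by rewrite sum_delta.
Qed.

Lemma op_ext (A B : qop) : (forall x, opapply A (delta x) = opapply B (delta x)) -> A = B.
Proof.
move=> h; apply/ffunP => -[y x]; have := h x; rewrite !opapply_delta => /ffunP/(_ y).
by rewrite !ffunE.
Qed.

Lemma Q_nonzero : exists phi, stab_code C lam phi /\ phi != 0.
Proof.
case: (pickP (fun x => Pop (x, x) != 0)) => [x hx|hnone]; last first.
  have := tr_P; rewrite /tr big1 => [/eqP|x _]; last by have := hnone x => /negbFE/eqP.
  by rewrite eq_sym (negbTE N_neq0).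
exists (opapply Pop (delta x)); split; first exact: Q_P.
apply/eqP => /ffunP/(_ x); rewrite opapply_delta !ffunE => h.
by rewrite h eqxx in hx.
Qed.

Lemma tr_EwP w : w \notin C -> tr (opmul (Eop w) Pop) = 0.
Proof.
move=> hw; rewrite /Pop opmul_sumr tr_sum big1 // => v hv.
rewrite opmul_scaler EopM' !tr_scale tr_E ?mulr0 //.
apply: contra hw => /eqP h; have -> : w = - v by rewrite -(addrK v w) h sub0r.
exact: CN.
Qed.

Lemma scalar_in_C w nu :
  (forall phi, stab_code C lam phi -> opapply (Eop w) phi = vscale nu phi) -> w \in C.
Proof.
move=> h; apply/negPn/negP => hw.
have e : opmul (Eop w) Pop = opscale nu Pop.
  apply: op_ext => x; rewrite opapplyM opapply_scale h //; exact: Q_P.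
have := tr_EwP hw; rewrite e tr_scale tr_P => /eqP; rewrite mulf_eq0 (negbTE N_neq0) orbF => /eqP nu0.
have [phi [hphi nz]] := Q_nonzero.
have := h phi hphi; rewrite nu0 => e2.
have : opapply (Eop w) phi = 0 by rewrite e2; apply/ffunP => y; rewrite !ffunE mul0r.
by move/Eop_apply_eq0 => /(_ pP) /eqP; rewrite (negbTE nz).
Qed.

End Stab.


Section Kraus.
Variables (K : numClosedFieldType) (p n : nat).
Local Notation basis := (fvec p n).
Local Notation qop := (qop K p n).
Local Notation qvec := (qvec K p n).

Definition beta (chi u : qvec) : K := \sum_y chi y * u y.
Definition qf (A : qop) (chi : qvec) : K := \sum_y \sum_x chi y * A (y, x) * (chi x)^*.

Lemma qf_ketbra u chi : qf (ketbra u) chi = beta chi u * (beta chi u)^*.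
Proof.
rewrite /qf /beta rmorph_sum mulr_suml; apply: eq_bigr => y _.
rewrite mulr_sumr; apply: eq_bigr => x _.
by rewrite ffunE rmorphM /=; ring.
Qed.

Lemma qfD A B chi : qf (A + B) chi = qf A chi + qf B chi.
Proof.
rewrite /qf -big_split; apply: eq_bigr => y _; rewrite -big_split.
by apply: eq_bigr => x _; rewrite ffunE /=; ring.
Qed.

Lemma qf0 chi : qf 0 chi = 0.
Proof. by rewrite /qf big1 // => y _; rewrite big1 // => x _; rewrite ffunE mulr0 mul0r. Qed.

Lemma qf_sum (T : Type) (r : seq T) (P : pred T) (F : T -> qop) chi :
  qf (\sum_(i <- r | P i) F i) chi = \sum_(i <- r | P i) qf (F i) chi.
Proof. exact: (big_morph (qf ^~ chi) (fun A B => qfD A B chi) (qf0 chi)). Qed.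

Lemma qf_scale c A chi : qf (opscale c A) chi = c * qf A chi.
Proof.
rewrite /qf mulr_sumr; apply: eq_bigr => y _; rewrite mulr_sumr.
by apply: eq_bigr => x _; rewrite ffunE; ring.
Qed.

Lemma ketbra_conj (A : qop) phi :
  opmul (opmul A (ketbra phi)) (opadj A) = ketbra (opapply A phi).
Proof.
apply/ffunP => -[y x]; rewrite opmulE.
have e : forall z, opmul A (ketbra phi) (y, z) = opapply A phi y * (phi z)^*.
  move=> z; rewrite opmulE opapplyE mulr_suml; apply: eq_bigr => w _; rewrite ffunE /=; ring.
under eq_bigr => z _ do rewrite e.
rewrite [RHS]ffunE /= (opapplyE A phi x) rmorph_sum mulr_sumr; apply: eq_bigr => z _.
rewrite !ffunE rmorphM /=; ring.
Qed.

Lemma span_of (u phi : qvec) : phi != 0 ->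
  (forall chi, beta chi phi = 0 -> beta chi u = 0) -> exists t, u = vscale t phi.
Proof.
move=> nz h.
set g := \sum_y (phi y)^* * phi y.
set hh := \sum_y (phi y)^* * u y.
have gnz : g != 0.
  apply/negP => /eqP g0.
  have : forall y, (phi y)^* * phi y = 0.
    move=> y; apply: (psumr_eq0P _ g0) => // z _; rewrite mulrC; exact: mul_conjC_ge0.
  move=> hy; move/negP: nz; apply; apply/eqP/ffunP => y; rewrite ffunE.
  by apply/eqP; rewrite -mul_conjC_eq0 mulrC hy.
exists (hh / g).
set d : qvec := [ffun y => u y - hh / g * phi y].
have dphi : \sum_y (phi y)^* * d y = 0.
  under eq_bigr => y _ do rewrite ffunE mulrBr.
  rewrite sumrB -/hh.
  under eq_bigr => y _ do rewrite mulrCA.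
  by rewrite -mulr_sumr -/g mulfVK // subrr.
have hchi : beta [ffun y => (d y)^*] phi = 0.
  have e : \sum_y ((phi y)^* * d y)^* = 0 by rewrite -rmorph_sum dphi rmorph0.
  rewrite /beta; transitivity (\sum_y ((phi y)^* * d y)^*); last exact: e.
  apply: eq_bigr => y _.
  by rewrite ffunE rmorphM /= conjCK mulrC.
have bu := h _ hchi.
have dd : \sum_y (d y)^* * d y = 0.
  have dE : forall y, d y = u y - hh / g * phi y by move=> y; rewrite ffunE.
  clearbody d.
  under eq_bigr => y _ do rewrite [X in _ * X]dE mulrBr.
  rewrite sumrB.
  have -> : \sum_y (d y)^* * u y = 0 by rewrite -[RHS]bu /beta; apply: eq_bigr => y _; rewrite ffunE.
  under eq_bigr => y _ do rewrite mulrCA.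
  rewrite -mulr_sumr.
  have -> : \sum_y (d y)^* * phi y = 0 by rewrite -[RHS]hchi /beta; apply: eq_bigr => y _; rewrite ffunE.
  by rewrite mulr0 subrr.
apply/ffunP => y; rewrite ffunE; apply/eqP; rewrite -subr_eq0.
have : (d y)^* * d y = 0.
  apply: (psumr_eq0P _ dd) => // z _; rewrite mulrC; exact: mul_conjC_ge0.
by move/eqP; rewrite mulrC mul_conjC_eq0 ffunE.
Qed.

End Kraus.


Section Extract.
Variables (K : numClosedFieldType) (p n : nat).
Hypothesis pP : prime p.
Local Notation basis := (fvec p n).
Local Notation sv := (svec p n).
Local Notation qop := (qop K p n).
Local Notation qvec := (qvec K p n).
Local Notation Eop := (@Eop K p n).

Lemma opscaleD c (A B : qop) : opscale c (A + B) = opscale c A + opscale c B.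
Proof. by apply/ffunP => yx; rewrite !ffunE mulrDr. Qed.
Lemma opscale0 c : opscale c (0 : qop) = 0.
Proof. by apply/ffunP => yx; rewrite !ffunE mulr0. Qed.
Lemma opscale_sum_seq (T : Type) (r : seq T) (P : pred T) c (F : T -> qop) :
  opscale c (\sum_(i <- r | P i) F i) = \sum_(i <- r | P i) opscale c (F i).
Proof. exact: (big_morph (opscale c) (opscaleD c) (opscale0 c)). Qed.

Lemma ketbra0 : ketbra (0 : qvec) = 0.
Proof. by apply/ffunP => yx; rewrite !ffunE mul0r. Qed.

Lemma kraus_expand I J ks (phi : qvec) :
  kraus_apply J ks (GammaI I (ketbra phi)) =
  opscale ((p%:R : K) ^+ (2 * #|I|))^-1
    (\sum_(k <- ks) \sum_(a : sv | ssupp a \subset I)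
        ketbra (opapply (liftJ J k) (opapply (Eop a) phi))).
Proof.
rewrite /kraus_apply /GammaI [RHS]opscale_sum_seq; apply: eq_bigr => k _.
rewrite opmul_scaler opmul_scalel; f_equal.
rewrite opmul_sumr opmul_suml; apply: eq_bigr => a _.
by rewrite !ketbra_conj.
Qed.


Lemma vec_nz_pick (v : qvec) : v != 0 -> exists x, v x != 0.
Proof.
move=> nz; case: (pickP (fun x => v x != 0)) => [x hx|h]; first by exists x.
move/negP: nz; case; apply/eqP/ffunP => x; rewrite ffunE; apply/eqP.
by have := h x => /negbFE.
Qed.

Lemma kraus_extract I J ks (phi : qvec) : phi != 0 ->
  kraus_apply J ks (GammaI I (ketbra phi)) = ketbra phi ->
  (forall k a, k \in ks -> ssupp a \subset I ->
     exists t, opapply (liftJ J k) (opapply (Eop a) phi) = vscale t phi) /\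
  exists k a, [/\ k \in ks, ssupp a \subset I &
     opapply (liftJ J k) (opapply (Eop a) phi) != 0].
Proof.
move=> nz H; rewrite kraus_expand in H.
set c := ((p%:R : K) ^+ (2 * #|I|))^-1 in H.
have cnz : c != 0.
  rewrite /c invr_eq0 expf_neq0 // pnatr_eq0; apply/negP => /eqP p0; move: pP; by rewrite p0.
set u := fun k a => opapply (liftJ J k) (opapply (Eop a) phi).
have ge0 : forall (A : seq qop) chi, forall k, 0 <= qf (\sum_(a : sv | ssupp a \subset I)
        ketbra (opapply (liftJ J k) (opapply (Eop a) phi))) chi.
  move=> _ chi k; rewrite qf_sum; apply: sumr_ge0 => a _; rewrite qf_ketbra; exact: mul_conjC_ge0.
split.
  move=> k a hk ha; apply: span_of nz _ => chi hchi.
  have := congr1 (fun A : qop => qf A chi) H; rewrite /= qf_scale qf_ketbra hchi mul0r qf_sum => /eqP.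
  rewrite mulf_eq0 (negbTE cnz) /= psumr_eq0 => [/allP/(_ k hk)/= /eqP|k' _]; last exact: ge0.
  rewrite qf_sum => h0.
  have h1 : forall a', ssupp a' \subset I ->
      qf (ketbra (opapply (liftJ J k) (opapply (Eop a') phi))) chi = 0.
    apply: (psumr_eq0P _ h0) => a' _; rewrite qf_ketbra; exact: mul_conjC_ge0.
  by have := h1 a ha; rewrite qf_ketbra => /eqP; rewrite mul_conjC_eq0 => /eqP.
case: (boolP (has (fun k => [exists a, (ssupp a \subset I) && (u k a != 0)]) ks)).
  by move=> /hasP[k hk /existsP[a /andP[ha hu]]]; exists k, a.
move=> /hasPn hno; exfalso.
have S0 : \sum_(k <- ks) \sum_(a : sv | ssupp a \subset I)
        ketbra (opapply (liftJ J k) (opapply (Eop a) phi)) = 0.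
  rewrite big_seq big1 // => k hk; rewrite big1 // => a ha.
  have := hno k hk => /existsPn/(_ a); rewrite ha /= negbK => /eqP e.
  by rewrite /u /= in e; rewrite e ketbra0.
rewrite S0 opscale0 in H.
have [x hx] := vec_nz_pick nz.
have := congr1 (fun A : qop => A (x, x)) H; rewrite !ffunE /= => /eqP.
by rewrite eq_sym mul_conjC_eq0 (negbTE hx).
Qed.

End Extract.


Section Comm.
Variables (K : numClosedFieldType) (p n : nat).
Hypothesis pP : prime p.
Local Notation basis := (fvec p n).
Local Notation sv := (svec p n).
Local Notation qop := (qop K p n).
Local Notation qvec := (qvec K p n).
Local Notation Eop := (@Eop K p n).
Local Notation ph := (@ph K p).
Local Notation opid := (opid K p n).
Let EopE := @Eop_E K p n pP.

Lemma liftJ_E (J : {set 'I_n}) (k : qop) y x :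
  liftJ J k (y, x) = if agree_off J y x then k (padJ J y, padJ J x) else 0.
Proof. by rewrite ffunE. Qed.

Lemma liftJ_comm (J : {set 'I_n}) (k : qop) (v : sv) :
  (forall j, j \in J -> v.1 j = 0 /\ v.2 j = 0) ->
  opmul (liftJ J k) (Eop v) = opmul (Eop v) (liftJ J k).
Proof.
move=> hv; apply/ffunP => -[y x]; rewrite !opmulE.
under eq_bigr => z _ do rewrite EopE mulrCA.
rewrite sum_delta.
under eq_bigr => z _ do rewrite EopE eq_shift -mulrA.
rewrite sum_delta !liftJ_E.
have pad1 : padJ J (x + v.1) = padJ J x.
  by apply/ffunP => j; rewrite !ffunE; case: ifP => // /hv[-> _]; rewrite addr0.
have pad2 : padJ J (y - v.1) = padJ J y.
  by apply/ffunP => j; rewrite !ffunE; case: ifP => // /hv[-> _]; rewrite subr0.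
have ag : agree_off J y (x + v.1) = agree_off J (y - v.1) x.
  apply/forallP/forallP => h j; have := h j; rewrite !ffunE.
    by move=> /implyP h' ; apply/implyP => /h'; rewrite subr_eq.
  by move=> /implyP h' ; apply/implyP => /h'; rewrite subr_eq.
rewrite ag pad1 pad2; case: ifP => hag; last by rewrite mulr0 mul0r.
rewrite mulrC; congr (_ * _); congr ph.
apply: eq_bigr => j _; case: (boolP (j \in J)) => hj; first by have [_ ->] := hv j hj; rewrite !mul0r.
move/forallP/(_ j): hag; rewrite hj /= => /eqP <-.
by rewrite ffunE.
Qed.

Variables (C : {set sv}) (lam : qop -> K).
Hypothesis linC : linear_code C.
Hypothesis chi : stab_character C lam.

Lemma Ecomm c y : symp c y = 0 -> opmul (Eop c) (Eop y) = opmul (Eop y) (Eop c).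
Proof.
move=> h; rewrite !EopM' // addrC; congr opscale; congr ph.
move: h; rewrite /symp sumrB => /eqP; rewrite subr_eq0 => /eqP.
rewrite /dotF => e; rewrite [LHS](_ : _ = \sum_j c.1 j * y.2 j).
  by apply: eq_bigr => j _; rewrite mulrC.
by rewrite e.
Qed.

Lemma stab_comm y A : y \in symp_dual C -> stab C A ->
  opmul A (Eop y) = opmul (Eop y) A.
Proof.
rewrite inE => /forall_inP hy; elim => [l|c hc|A' B _ IA _ IB].
- by rewrite opmul_scalel opmul_scaler opmul1l opmul1r.
- by apply: Ecomm; apply/eqP; apply: hy.
- by rewrite opmulA IB -opmulA IA opmulA.
Qed.

Lemma Q_E y phi : y \in symp_dual C -> stab_code C lam phi ->
  stab_code C lam (opapply (Eop y) phi).
Proof.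
move=> hy hphi A hA; rewrite -opapplyM stab_comm // opapplyM hphi //.
by rewrite opapply_vscale.
Qed.

Lemma Q_add phi psi : stab_code C lam phi -> stab_code C lam psi ->
  stab_code C lam (phi + psi).
Proof.
move=> h1 h2 A hA; rewrite opapplyD h1 // h2 //.
by apply/ffunP => y; rewrite !ffunE mulrDr.
Qed.

Lemma Q_scale c phi : stab_code C lam phi -> stab_code C lam (vscale c phi).
Proof. by move=> h A hA; rewrite opapply_vscale h //; apply/ffunP => y; rewrite !ffunE mulrCA. Qed.

Lemma vscaleM c d (v : qvec) : vscale c (vscale d v) = vscale (c * d) v.
Proof. by apply/ffunP => y; rewrite !ffunE mulrA. Qed.

Lemma uniform_eig (A : qop) :
  (forall chi, stab_code C lam chi -> exists t, opapply A chi = vscale t chi) ->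
  exists nu, forall chi, stab_code C lam chi -> opapply A chi = vscale nu chi.
Proof.
move=> h.
have [phi0 [hphi0 nz]] := Q_nonzero pP linC chi.
have [x0 hx0] := vec_nz_pick nz.
have [nu hnu] := h _ hphi0.
exists nu => v hv.
have [l hl] := h _ hv.
have [l3 hl3] := h _ (Q_add hv hphi0).
rewrite opapplyD hl hnu in hl3.
have e : forall y, (l - l3) * v y = (l3 - nu) * phi0 y.
  move=> y; move/ffunP/(_ y): hl3; rewrite !ffunE => e; rewrite mulrBl mulrBl.
  apply/eqP; rewrite subr_eq addrAC eq_sym subr_eq -mulrDr.
  by rewrite e addrC.
case: (eqVneq l l3) => hll.
  have := e x0; rewrite hll subrr mul0r => /esym/eqP; rewrite mulf_eq0 (negbTE hx0) orbF.
  by rewrite subr_eq0 => /eqP e3; rewrite hl hll e3.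
have hv' : v = vscale ((l3 - nu) / (l - l3)) phi0.
  apply/ffunP => y; rewrite ffunE mulrAC -e mulrAC divff ?mul1r //.
  by rewrite subr_eq0.
by rewrite hv' opapply_vscale hnu !vscaleM mulrC.
Qed.

End Comm.


Section Vec.
Variables (K : numClosedFieldType) (p n : nat).
Local Notation qvec := (qvec K p n).
Lemma vscale0 c : vscale c (0 : qvec) = 0.
Proof. by apply/ffunP => y; rewrite !ffunE mulr0. Qed.
Lemma vscale0l (v : qvec) : vscale 0 v = 0.
Proof. by apply/ffunP => y; rewrite !ffunE mul0r. Qed.
Lemma vscale1 (v : qvec) : vscale 1 v = v.
Proof. by apply/ffunP => y; rewrite !ffunE mul1r. Qed.
Lemma vscaleK d (v : qvec) : d != 0 -> vscale d^-1 (vscale d v) = v.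
Proof. by move=> hd; rewrite vscaleM mulVf // vscale1. Qed.
Lemma vscale_eq0 d (v : qvec) : d != 0 -> vscale d v = 0 -> v = 0.
Proof. by move=> hd e; rewrite -(vscaleK v hd) e vscale0. Qed.
End Vec.

Section Supp.
Variables (p n : nat).
Local Notation sv := (svec p n).

Lemma ssupp_out (v : sv) (S : {set 'I_n}) j : ssupp v \subset S -> j \notin S ->
  v.1 j = 0 /\ v.2 j = 0.
Proof.
move=> /subsetP h hj; have : j \notin ssupp v by apply: contra hj; apply: h.
by rewrite inE negb_or !negbK => /andP[/eqP -> /eqP ->].
Qed.

Lemma sproj_ssupp (v : sv) S : ssupp (sproj S v) \subset S.
Proof.
apply/subsetP => j; rewrite !inE !ffunE.
by case: (j \in S) => //; rewrite eqxx.
Qed.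

Lemma sprojN S (v : sv) : sproj S (- v) = - sproj S v.
Proof.
by rewrite /sproj; congr pair; apply/ffunP => j; rewrite !ffunE; case: ifP; rewrite ?oppr0.
Qed.

Lemma symp_N (u v : sv) : symp u (- v) = - symp u v.
Proof.
rewrite /symp -sumrN; apply: eq_bigr => j _ /=; rewrite !ffunE; ring.
Qed.

Lemma dual_N (C : {set sv}) y : y \in symp_dual C -> - y \in symp_dual C.
Proof.
rewrite !inE => /forall_inP h; apply/forall_inP => u hu.
by rewrite symp_N oppr_eq0 h.
Qed.

Lemma dotF_disj (b x : fvec p n) : (forall j, b j = 0 \/ x j = 0) -> dotF b x = 0.
Proof. by move=> h; rewrite /dotF big1 // => j _; case: (h j) => ->; rewrite ?mul0r ?mulr0. Qed.

End Supp.

Section Core.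
Variables (K : numClosedFieldType) (p n : nat).
Hypothesis pP : prime p.
Local Notation basis := (fvec p n).
Local Notation sv := (svec p n).
Local Notation qop := (qop K p n).
Local Notation qvec := (qvec K p n).
Local Notation Eop := (@Eop K p n).
Local Notation ph := (@ph K p).

Variables (C : {set sv}) (lam : qop -> K).
Hypothesis linC : linear_code C.
Hypothesis chi : stab_character C lam.
Variables (I J : {set 'I_n}) (ks : seq qop).
Hypothesis hIJ : I \subset J.
Hypothesis hks : forall phi, stab_code C lam phi ->
  kraus_apply J ks (GammaI I (ketbra phi)) = ketbra phi.

Let EopM2 := @EopM' K p n pP.
Let Eop02 := @Eop0' K p n pP.

Definition zeroJI (y : sv) := forall j, j \in J -> j \notin I -> y.1 j = 0 /\ y.2 j = 0.

Lemma split_y y : zeroJI y -> y = sproj I y + sproj (~: J) y.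
Proof.
case: y => a b h; congr pair => /=; apply/ffunP => j; rewrite !ffunE inE;
  case: (boolP (j \in I)) => hi.
- by rewrite (subsetP hIJ j hi) addr0.
- by case: (boolP (j \in J)) => hj /=; [rewrite add0r; have [-> _] := h j hj hi | rewrite add0r].
- by rewrite (subsetP hIJ j hi) addr0.
- by case: (boolP (j \in J)) => hj /=; [rewrite add0r; have [_ ->] := h j hj hi | rewrite add0r].
Qed.


Lemma zeroJI_N y : zeroJI y -> zeroJI (- y).
Proof. by move=> h j hj hi; have [e1 e2] := h j hj hi; rewrite /= !ffunE e1 e2 oppr0. Qed.

Lemma oJ_zero (y : sv) j : j \in J -> (sproj (~: J) y).1 j = 0 /\ (sproj (~: J) y).2 j = 0.
Proof. by move=> hj; rewrite !ffunE inE hj. Qed.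

Lemma disj_bo (b : sv) (y : sv) : ssupp b \subset I ->
  dotF (sproj (~: J) y).2 b.1 = 0 /\ dotF b.2 (sproj (~: J) y).1 = 0.
Proof.
move=> hb; split; apply: dotF_disj => j; case: (boolP (j \in I)) => hi.
- by left; have [_ ->] := oJ_zero y (subsetP hIJ j hi).
- by right; have [-> _] := ssupp_out hb hi.
- by right; have [-> _] := oJ_zero y (subsetP hIJ j hi).
- by left; have [_ ->] := ssupp_out hb hi.
Qed.

Lemma S1 y phi : y \in symp_dual C -> zeroJI y -> stab_code C lam phi ->
  exists s, opapply (Eop (sproj (~: J) y)) phi = vscale s (opapply (Eop y) phi).
Proof.
move=> hy hz hphi.
case: (eqVneq phi 0) => [->|nz]; first by exists 0; rewrite opapply0 vscale0l.
have [part1 [k [b [hk hb hne]]]] := kraus_extract pP nz (hks hphi).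
have [l1 e1] := part1 k b hk hb.
have l1nz : l1 != 0 by apply: contra hne => /eqP l0; rewrite e1 l0 vscale0l.
set w := sproj I y; set o := sproj (~: J) y.
have ysp : y = w + o by exact: split_y.
set a := b - w.
have ha : ssupp a \subset I.
  apply/subsetP => j; apply: contraLR => hj; rewrite inE negb_or !negbK /= !ffunE.
  have [-> ->] := ssupp_out hb hj; by rewrite (negbTE hj) subrr eqxx.
set psi := opapply (Eop y) phi.
have hpsi : stab_code C lam psi by exact: (Q_E pP).
have nzpsi : psi != 0 by apply: contra nz => /eqP /(Eop_apply_eq0 pP) ->.
have [part1' _] := kraus_extract pP nzpsi (hks hpsi).
have [mu e2] := part1' k a hk ha.
have eab : a + y = b + o by rewrite ysp /a addrA subrK.
have [d1 d2] := disj_bo y hb.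
have Ebo : Eop (b + o) = opmul (Eop o) (Eop b).
  by rewrite EopM2 d1 ph0 opscale1 addrC.
have key : opapply (liftJ J k) (opapply (Eop a) psi) =
    vscale (ph (dotF a.2 y.1) * l1) (opapply (Eop o) phi).
  rewrite /psi -[opapply (Eop a) _]opapplyM EopM2 eab Ebo opapply_scale opapply_vscale.
  rewrite opapplyM -opapplyM (liftJ_comm pP); last exact: oJ_zero.
  by rewrite opapplyM e1 opapply_vscale vscaleM.
rewrite e2 in key.
exists (mu / (ph (dotF a.2 y.1) * l1)).
have cnz : ph (dotF a.2 y.1) * l1 != 0 by rewrite mulf_neq0 // ph_neq0.
by rewrite -(vscaleK (opapply (Eop o) phi) cnz) -key vscaleM mulrC.
Qed.

Lemma S2 y : y \in symp_dual C -> zeroJI y -> forall v, stab_code C lam v ->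
  exists t, opapply (Eop (sproj I y)) v = vscale t v.
Proof.
move=> hy hz v hv.
case: (eqVneq v 0) => [->|nz]; first by exists 0; rewrite opapply0 vscale0l.
set o := sproj (~: J) y.
have [s hs] := S1 (dual_N hy) (zeroJI_N hz) hv.
rewrite sprojN -/o in hs.
set phi := opapply (Eop (- o)) v.
have hphi : stab_code C lam phi by rewrite /phi hs; apply: Q_scale; apply: (Q_E pP) => //; apply: dual_N.
have [s' hs'] := S1 hy hz hphi.
rewrite -/o /phi -!opapplyM !EopM2 subrr Eop02 opapply_scale opapply_id in hs'.
have ew : y + - o = sproj I y by rewrite {1}(split_y hz) -/o addrK.
rewrite ew opapply_scale vscaleM in hs'.
set c := s' * _ in hs'.
have cnz : c != 0.
  apply: contra nz => /eqP c0; rewrite c0 vscale0l in hs'.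
  by apply/eqP; apply: vscale_eq0 hs'; apply: ph_neq0.
exists (c^-1 * ph (dotF o.2 (- o).1)).
by rewrite -vscaleM hs' vscaleK.
Qed.

Lemma core y : y \in symp_dual C -> zeroJI y -> sproj I y \in C.
Proof.
move=> hy hz.
have [nu hnu] := uniform_eig pP linC chi (S2 hy hz).
exact: (scalar_in_C pP linC chi hnu).
Qed.

End Core.


Theorem proposition17 (K : numClosedFieldType) (p n : nat)
    (C : {set svec p n}) (lam : qop K p n -> K) (I J : {set 'I_n}) :
  prime p ->
  linear_code C ->
  symp_self_orth C ->
  stab_character C lam ->
  I != set0 -> I \proper J -> J \proper [set: 'I_n] ->
  locally_recoverable (stab_code C lam) I J ->
  code_shorten I (code_puncture J (symp_dual C)) = code_shorten I C.
Proof.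
move=> pP linC so chi _ /properP[hIJ _] _ [_ _ [ks [_ hks]]].
apply/setP => z; apply/idP/idP.
- case/imsetP => y'; rewrite inE => /andP[/imsetP[y hy ->] hs] ->.
  have hz : zeroJI I J y.
    move=> j hj hi; have := ssupp_out hs hi; rewrite !ffunE hj; by case.
  have hw := core pP linC chi hIJ hks hy hz.
  apply/imsetP; exists (sproj I y); first by rewrite inE hw sproj_ssupp.
  rewrite /sproj; congr pair; apply/ffunP => j; rewrite !ffunE;
    by case: (boolP (j \in I)) => // hi; rewrite (subsetP hIJ j hi).
- case/imsetP => c; rewrite inE => /andP[hc hs] ->.
  apply/imsetP; exists (sproj J c).
    rewrite inE; apply/andP; split.
      by apply/imsetP; exists c => //; apply: (subsetP so).
    apply/subsetP => j; rewrite inE !ffunE; case: ifP => _; last by rewrite eqxx.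
    by move=> h; apply: (subsetP hs); rewrite inE.
  rewrite /sproj; congr pair; apply/ffunP => j; rewrite !ffunE;
    by case: (boolP (j \in I)) => // hi; rewrite (subsetP hIJ j hi).
Qed.
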